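(* If $(\Lambda,Y)$ is an extensible graph with parameters $(t,s,\bar s)$, then its complementary graph $(\bar\Lambda,Y)$ is also extensible, and its parameters $(\bar t,s',\bar s')$ satisfy $s'=\bar s$, $\bar s'=s$ and $t+\bar t=s+\bar s-2=s'+\bar s'-2$.
   Context: A finite simple graph $(\Lambda,Y)$ is extensible with parameters $(t,s,\bar s)$ (nonnegative integers) if: (1) $\Lambda$ has diameter $2$; (2) for every $y\in Y$, with $\Lambda(y,d)$ the set of vertices at distance $d$ from $y$: (a) $|\Lambda(y,1)|=2s$; (b) $|\Lambda(y,2)|=2\bar s$; (c) every $z\in\Lambda(y,1)$ is adjacent to exactly $\bar s$ points of $\Lambda(y,2)$ and exactly $t=2s-\bar s-1$ points of $\Lambda(y,1)$; (d) every $z\in\Lambda(y,2)$ is adjacent to exactly $s$ points of $\Lambda(y,2)$ and exactly $s$ points of $\Lambda(y,1)$; (3) every edge lies in exactly $t$ triangles; (4) $|Y|=1+2s+2\bar s$. The complementary graph $(\bar\Lambda,Y)$ has vertex set $Y$ and as edges the non-edges of $\Lambda$. *)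

(* Defs.v *)
From mathcomp Require Import all_boot.
Set Implicit Arguments. Unset Strict Implicit. Unset Printing Implicit Defensive.

Section Graphs.
Variable T : finType.

Definition simple_graph (e : rel T) : Prop :=
  symmetric e /\ irreflexive e.

Definition nbhd1 (e : rel T) (y : T) : {set T} := [set z | e y z].

Definition nbhd2 (e : rel T) (y : T) : {set T} :=
  [set z | [&& z != y, ~~ e y z & [exists w, e y w && e w z]]].

Definition diameter2 (e : rel T) : Prop :=
  (forall x y, x != y -> e x y \/ exists w, e x w /\ e w y) /\
  (exists x y, x != y /\ ~~ e x y).

(* Extensible graph with parameters (t, s, sb) (sb stands for \bar s);
   the relation t = 2s - sb - 1 is stated without truncated subtraction. *)
Definition extensible (e : rel T) (t s sb : nat) : Prop :=
  [/\ t + sb + 1 = 2 * s,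
      diameter2 e,
      (forall y,
         [/\ #|nbhd1 e y| = 2 * s,
             #|nbhd2 e y| = 2 * sb,
             (forall z, z \in nbhd1 e y ->
                #|nbhd2 e y :&: nbhd1 e z| = sb /\
                #|nbhd1 e y :&: nbhd1 e z| = t) &
             (forall z, z \in nbhd2 e y ->
                #|nbhd2 e y :&: nbhd1 e z| = s /\
                #|nbhd1 e y :&: nbhd1 e z| = s)]),
      (forall x y, e x y -> #|[set z | e x z && e y z]| = t) &
      #|T| = 1 + 2 * s + 2 * sb].

Definition compl_graph (e : rel T) : rel T := fun x y => (x != y) && ~~ e x y.

End Graphs.

(* Main.v *)
Require Import Defs.
From mathcomp Require Import all_boot.
From mathcomp Require Import zify.

Lemma card_split (T : finType) (A B : {set T}) (z : T) :
  #|A :&: ((~: B) :\ z)| + #|A :&: B| + ((z \in A) && (z \notin B)) = #|A|.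
Proof.
have -> : A :&: ((~: B) :\ z) = (A :\: B) :\ z.
  by apply/setP => x; rewrite !inE; case: (x == z); case: (x \in A); case: (x \in B).
rewrite -(cardsID B A) (cardsD1 z (A :\: B)) !inE.
by case: (z \in A); case: (z \in B) => /=; lia.
Qed.

Section Pf.
Variables (T : finType) (e : rel T).
Hypothesis (hsym : symmetric e) (hirr : irreflexive e).

Lemma N1c (hd : forall x y, x != y -> e x y \/ exists w, e x w /\ e w y) y :
  nbhd1 (compl_graph e) y = nbhd2 e y.
Proof.
apply/setP => z; rewrite !inE /compl_graph eq_sym.
case: eqP => //= /eqP hzy; case: (boolP (e y z)) => //= hyz.
symmetry; apply/existsP.
have : y != z by rewrite eq_sym.
move/hd => [|[w [h1 h2]]]; first by rewrite (negbTE hyz).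
by exists w; rewrite h1 h2.
Qed.

Lemma N1cz z : nbhd1 (compl_graph e) z = (~: nbhd1 e z) :\ z.
Proof. by apply/setP => w; rewrite !inE /compl_graph eq_sym. Qed.

End Pf.

Theorem proposition6 (T : finType) (e : rel T) (t s sb : nat) :
  simple_graph e ->
  extensible e t s sb ->
  exists tb s' sb' : nat,
    [/\ extensible (compl_graph e) tb s' sb',
        s' = sb, sb' = s,
        t + tb + 2 = s + sb &
        t + tb + 2 = s' + sb'].
Proof.
move=> [hsym hirr] [ht [hd1 hd2] hy htri hcard].
have hN1 := @N1c T e hd1.
have key : s + 1 <= 2 * sb.
  move: hd2 => [x [y [hxy hnxy]]].
  have yN2 : y \in nbhd2 e x by rewrite -hN1 inE /compl_graph hxy hnxy.
  have [_ h2 _ h4] := hy x.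
  have [h5 _] := h4 y yN2.
  have := @card_split _ (nbhd2 e x) (nbhd1 e y) y.
  rewrite yN2 inE hirr h5 h2 /=; lia.
have wit : forall y z, e y z -> exists w,
    compl_graph e y w && compl_graph e w z.
  move=> y z hyz.
  have [_ h2 h3 _] := hy y.
  have [h5 _] : _ /\ _ := h3 z ltac:(by rewrite inE).
  have : 0 < #|nbhd2 e y :\: nbhd1 e z|.
    have := cardsID (nbhd1 e z) (nbhd2 e y); rewrite h5 h2; lia.
  rewrite card_gt0 => /set0Pn [w]; rewrite !inE => /andP [hwz /and3P [hwy hyw _]].
  exists w; rewrite /compl_graph eq_sym hwy hyw /=.
  have -> : w != z by apply/eqP => ew; rewrite ew hyz in hyw.
  by rewrite hsym.
have hN2 : forall y, nbhd2 (compl_graph e) y = nbhd1 e y.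
  move=> y; apply/setP => z; rewrite !inE.
  case: (boolP (e y z)) => hyz.
  - have -> : z != y by apply/eqP => ezy; rewrite ezy hirr in hyz.
    rewrite /compl_graph hyz andbF /=.
    by apply/existsP; apply: wit.
  - case: eqP => //= /eqP hzy.
    by rewrite /compl_graph eq_sym hzy hyz.
exists (2 * sb - s - 1), sb, s; split; try lia.
split.
- lia.
- split.
  + move=> x y hxy; case: (boolP (e x y)) => hexy.
    * right; have [w /andP [h1 h2]] := wit x y hexy; by exists w.
    * by left; rewrite /compl_graph hxy hexy.
  + have [x _] : exists x : T, x \in [set: T].
      have : 0 < #|[set: T]| by rewrite cardsT hcard.
      by rewrite card_gt0 => /set0Pn.
    have [h1 _ _ _] := hy x.
    have : 0 < #|nbhd1 e x| by rewrite h1; lia.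
    rewrite card_gt0 => /set0Pn [y]; rewrite inE => hexy.
    exists x, y; split.
    * by apply/eqP => exy; rewrite exy hirr in hexy.
    * by rewrite /compl_graph hexy andbF.
- move=> y; rewrite hN1 hN2.
  have [h1 h2 h3 h4] := hy y.
  split => // z hz.
  + have [h5 h6] := h4 z hz.
    have hnz : z \notin nbhd1 e y.
      move: hz; rewrite !inE => /and3P [_ ? _]; by [].
    rewrite N1cz; split.
    * have := @card_split _ (nbhd1 e y) (nbhd1 e z) z.
      rewrite (negbTE hnz) h6 h1 /=; lia.
    * have := @card_split _ (nbhd2 e y) (nbhd1 e z) z.
      rewrite hz inE hirr h5 h2 /=; lia.
  + have [h5 h6] := h3 z hz.
    have hnz : z \notin nbhd2 e y by move: hz; rewrite !inE => ->; rewrite andbF.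
    rewrite N1cz; split.
    * have := @card_split _ (nbhd1 e y) (nbhd1 e z) z.
      rewrite hz inE hirr h6 h1 /=; lia.
    * have := @card_split _ (nbhd2 e y) (nbhd1 e z) z.
      rewrite (negbTE hnz) h5 h2 /=; lia.
- move=> x y hxy.
  have yN2 : y \in nbhd2 e x by rewrite -hN1 inE.
  have -> : [set z | compl_graph e x z & compl_graph e y z] =
      nbhd2 e x :&: ((~: nbhd1 e y) :\ y).
    by rewrite -hN1 -N1cz; apply/setP => z; rewrite !inE.
  have [_ h2 _ h4] := hy x.
  have [h5 _] := h4 y yN2.
  have := @card_split _ (nbhd2 e x) (nbhd1 e y) y.
  rewrite yN2 inE hirr h5 h2 /=; lia.
- lia.
Qed.
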